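(* Let $A=(a_{n,k})$ be a real matrix with $a_{n,k}\ge0$ and $\sum_{k=0}^\infty a_{n,k}=1$ for every $n$, let $r\in\mathbb{N}$, $n\ge0$, and let $t\in\mathbb{R}$ with $t\neq\frac{2l\pi}{r}$ for all $l\in\mathbb{Z}$. Then $$\left|\sum_{k=0}^{\infty}a_{n,k}D^{\circ}_{k,1}(t)\right|\le\frac{1}{2\left|\sin\frac t2\sin\frac{rt}2\right|}\left(A_{n,r}+\sum_{k=0}^{r-1}a_{n,k}\right)\le\frac{1}{\left|\sin\frac t2\sin\frac{rt}2\right|}A_{n,r}.$$
   Context: $D^{\circ}_{k,1}(t)=\dfrac{\sin\frac{(2k+1)t}{2}}{2\sin\frac t2}$ and $A_{n,r}=\sum_{k=0}^\infty|a_{n,k}-a_{n,k+r}|$. *)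

(* Defs.v *)
From Stdlib Require Import Reals.
From Coquelicot Require Import Coquelicot.
Open Scope R_scope.

Definition Dker (k : nat) (t : R) : R :=
  sin ((2 * INR k + 1) * t / 2) / (2 * sin (t / 2)).

Definition Anr (a : nat -> nat -> R) (n r : nat) : R :=
  Series (fun k => Rabs (a n k - a n (k + r)%nat)).

(* Main.v *)
Require Import Defs.
From Stdlib Require Import Reals Lra Lia.
From Coquelicot Require Import Coquelicot.
Open Scope R_scope.

Lemma exs_R (a : nat -> R) (b : nat -> R) :
  (forall n, Rabs (a n) <= b n) -> ex_series b -> ex_series a.
Proof. intros H Hb. apply (ex_series_le a b); auto. Qed.

Theorem lemma4 (a : nat -> nat -> R)
  (Hpos : forall n k, 0 <= a n k)
  (Hsum : forall n, is_series (a n) 1)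
  (r : nat) (Hr : (0 < r)%nat) (n : nat) (t : R)
  (Ht : forall l : Z, t <> 2 * IZR l * PI / INR r) :
  Rabs (Series (fun k => a n k * Dker k t))
    <= / (2 * Rabs (sin (t / 2) * sin (INR r * t / 2)))
         * (Anr a n r + sum_n (fun k => a n k) (pred r))
  /\ / (2 * Rabs (sin (t / 2) * sin (INR r * t / 2)))
         * (Anr a n r + sum_n (fun k => a n k) (pred r))
     <= / Rabs (sin (t / 2) * sin (INR r * t / 2)) * Anr a n r.
Proof.
  set (b := a n).
  assert (Hb : ex_series b) by (eexists; apply Hsum).
  assert (Hrpos : 0 < INR r) by (apply lt_0_INR; lia).
  assert (Hs : sin (t/2) <> 0).
  { intro H. destruct (sin_eq_0_0 _ H) as [k Hk].
    apply (Ht (k * Z.of_nat r)%Z). rewrite mult_IZR, <- INR_IZR_INZ.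
    field_simplify; [|lra]. lra. }
  assert (HS : sin (INR r * t/2) <> 0).
  { intro H. destruct (sin_eq_0_0 _ H) as [k Hk].
    apply (Ht k). field_simplify; [|lra]. 
    apply (Rmult_eq_reg_l (INR r)); [|lra]. field_simplify; lra. }
  set (s := sin (t/2)) in *. set (SS := sin (INR r * t / 2)) in *.
  assert (Hbr : ex_series (fun k => b (r + k)%nat)) by (apply ex_series_incr_n; auto).
  assert (Hbr' : ex_series (fun k => b (k + r)%nat)).
  { eapply ex_series_ext; [|exact Hbr]. intro k; simpl. now rewrite Nat.add_comm. }
  assert (HA : ex_series (fun k => Rabs (b k - b (k + r)%nat))).
  { apply (exs_R _ (fun k => b k + b (k + r)%nat)).
    - intro k. rewrite Rabs_Rabsolu. unfold Rminus. eapply Rle_trans; [apply Rabs_triang|].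
      rewrite Rabs_Ropp, !Rabs_pos_eq; unfold b; auto with real.
    - apply (ex_series_plus b); auto. }
  set (B := sum_n b (pred r)).
  set (A := Anr a n r).
  assert (HBA : B <= A).
  { unfold A, Anr. fold b.
    assert (E : B = Series b - Series (fun k => b (r + k)%nat)).
    { rewrite (Series_incr_n b r Hr Hb). unfold B. rewrite sum_n_Reals. unfold Rminus; rewrite Rplus_assoc, Rplus_opp_r, Rplus_0_r; reflexivity. }
    rewrite E, <- Series_minus; auto.
    eapply Rle_trans; [apply Rle_abs|].
    eapply Rle_trans; [apply Series_Rabs|].
    - eapply ex_series_ext; [|exact HA]. intro k; simpl. now rewrite Nat.add_comm.
    - right. apply Series_ext. intro k. now rewrite Nat.add_comm. }
  assert (HB0 : 0 <= B).
  { unfold B. rewrite sum_n_Reals. apply cond_pos_sum. intro; apply Hpos. }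
  assert (HsS : 0 < Rabs (s * SS)).
  { apply Rabs_pos_lt. now apply Rmult_integral_contrapositive. }
  split.
  2:{ apply (Rmult_le_reg_l (2 * Rabs (s*SS))); [lra|].
      field_simplify; lra. }
  set (c := fun k : nat => cos ((2 * INR k + 1 - INR r) * t / 2)).
  assert (Hc : forall k, Rabs (c k) <= 1) by (intro; apply Rabs_le; apply COS_bound).
  assert (Hf : forall k, b k * Dker k t = / (4 * s * SS) * (b k * c k - b k * c (k + r)%nat)).
  { intro k. unfold Dker, c; cbv beta. fold s. rewrite plus_INR.
    replace ((2 * INR k + 1 - INR r) * t / 2) with ((2 * INR k + 1) * t / 2 - INR r * t / 2) by field.
    replace ((2 * (INR k + INR r) + 1 - INR r) * t / 2) with ((2 * INR k + 1) * t / 2 + INR r * t / 2) by field.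
    rewrite cos_minus, cos_plus. fold SS. field. auto. }
  rewrite (Series_ext _ _ Hf), Series_scal_l.
  assert (Hu : ex_series (fun k => b k * c k)).
  { apply (exs_R _ b); auto. intro k. rewrite Rabs_mult, (Rabs_pos_eq (b k)) by apply Hpos.
    specialize (Hc k). specialize (Hpos n k). fold b in Hpos. nra. }
  assert (Hv : ex_series (fun k => b k * c (k + r)%nat)).
  { apply (exs_R _ b); auto. intro k. rewrite Rabs_mult, (Rabs_pos_eq (b k)) by apply Hpos.
    specialize (Hc (k+r)%nat). specialize (Hpos n k). fold b in Hpos. nra. }
  rewrite Series_minus; auto.
  rewrite (Series_incr_n _ r Hr Hu).
  assert (Hw : ex_series (fun k => (b (r + k)%nat - b k) * c (r + k)%nat)).
  { apply (exs_R _ (fun k => Rabs (b k - b (k + r)%nat))); auto. intro k.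
    rewrite Rabs_mult, Nat.add_comm, <- Rabs_Ropp.
    replace (- (b (k + r)%nat - b k)) with (b k - b (k+r)%nat) by field.
    specialize (Hc (k+r)%nat). pose proof (Rabs_pos (b k - b (k + r)%nat)). nra. }
  assert (E : Series (fun k => b (r + k)%nat * c (r + k)%nat) - Series (fun k => b k * c (k + r)%nat)
              = Series (fun k => (b (r + k)%nat - b k) * c (r + k)%nat)).
  { rewrite <- Series_minus; auto.
    - apply Series_ext. intro k. rewrite (Nat.add_comm k r). ring.
    - apply (ex_series_incr_n (fun k => b k * c k)); auto. }
  replace (sum_f_R0 (fun k => b k * c k) (Init.Nat.pred r) +
     Series (fun k => b (r + k)%nat * c (r + k)%nat) - Series (fun k => b k * c (k + r)%nat))
    with (sum_f_R0 (fun k => b k * c k) (Init.Nat.pred r) +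
     (Series (fun k => b (r + k)%nat * c (r + k)%nat) - Series (fun k => b k * c (k + r)%nat))) by field.
  rewrite E.
  assert (H1 : Rabs (sum_f_R0 (fun k => b k * c k) (Init.Nat.pred r)) <= B).
  { unfold B. rewrite sum_n_Reals. eapply Rle_trans; [apply sum_f_R0_triangle|].
    apply sum_Rle. intros k _. rewrite Rabs_mult, (Rabs_pos_eq (b k)) by apply Hpos.
    specialize (Hc k). specialize (Hpos n k). fold b in Hpos. nra. }
  assert (H2 : Rabs (Series (fun k => (b (r + k)%nat - b k) * c (r + k)%nat)) <= A).
  { eapply Rle_trans; [apply Series_Rabs|].
    - apply (exs_R _ (fun k => Rabs (b k - b (k + r)%nat))); auto. intro k.
      rewrite Rabs_Rabsolu, Rabs_mult, Nat.add_comm, <- (Rabs_Ropp (b (k + r)%nat - b k)).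
      replace (- (b (k + r)%nat - b k)) with (b k - b (k+r)%nat) by field.
      specialize (Hc (k+r)%nat). pose proof (Rabs_pos (b k - b (k + r)%nat)). nra.
    - unfold A, Anr. fold b. apply Series_le; auto. intro k. split; [apply Rabs_pos|].
      rewrite Rabs_mult, Nat.add_comm, <- Rabs_Ropp.
      replace (- (b (k + r)%nat - b k)) with (b k - b (k+r)%nat) by field.
      specialize (Hc (k+r)%nat). pose proof (Rabs_pos (b k - b (k + r)%nat)). nra. }
  rewrite Rabs_mult.
  assert (H3 : Rabs (sum_f_R0 (fun k => b k * c k) (Init.Nat.pred r) +
      Series (fun k => (b (r + k)%nat - b k) * c (r + k)%nat)) <= A + B).
  { eapply Rle_trans; [apply Rabs_triang|]. lra. }
  rewrite Rabs_inv. replace (Rabs (4*s*SS)) with (2 * (2 * Rabs (s*SS))).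
  2:{ rewrite !Rabs_mult, (Rabs_pos_eq 4) by lra. field. }
  apply (Rmult_le_reg_l (2 * (2 * Rabs (s*SS)))); [lra|].
  field_simplify; try lra.
Qed.
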